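(* Let $\Lambda$ be a Euclidean lattice of minimum $m$ and rank $d$ containing two distinct sublattices $\Lambda'$ and $\Lambda''$ which are both perfect, of minimum $m$ and of rank $d-1$. Suppose that $\Lambda'+\Lambda''$ has rank $d$, and that $\Lambda$ contains a minimal vector $v$ such that $\mathbb Qv\cap\Lambda'=\mathbb Qv\cap\Lambda''=\{0\}$. Then $\Lambda$ is perfect.
   Context: The minimum of a lattice is the smallest squared Euclidean norm of a nonzero element; minimal vectors are the nonzero elements realising it. A lattice $L$ of rank $n$ is perfect if $\{v\otimes v\}$, $v$ ranging over its minimal vectors, spans the $\binom{n+1}{2}$-dimensional space of symmetric tensors in $(L\otimes\mathbb R)\otimes(L\otimes\mathbb R)$. *)

(* Defs.v *)
(* Euclidean lattices in the row space 'rV[R]_N over an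
   ordered field R, given by a basis matrix. *)
From HB Require Import structures.
From mathcomp Require Import all_boot all_order all_algebra.
Set Implicit Arguments. Unset Strict Implicit. Unset Printing Implicit Defensive.
Import Order.TTheory GRing.Theory Num.Theory.
Local Open Scope ring_scope.

Section Lattices.
Variables (R : realFieldType) (N : nat).

Definition sqnorm (v : 'rV[R]_N) : R := (v *m v^T) 0 0.

Definition in_lat k (B : 'M[R]_(k, N)) (u : 'rV[R]_N) : Prop :=
  exists z : 'I_k -> int, u = \sum_(i < k) (z i)%:~R *: row i B.

Definition lattice_basis k (B : 'M[R]_(k, N)) : Prop := row_free B.

Definition min_vec k (B : 'M[R]_(k, N)) (u : 'rV[R]_N) : Prop :=
  [/\ in_lat B u, u != 0 &
      forall w, in_lat B w -> w != 0 -> sqnorm u <= sqnorm w].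

Definition lat_min k (B : 'M[R]_(k, N)) (m : R) : Prop :=
  exists u, min_vec B u /\ sqnorm u = m.

(* tensor v (x) v, realised in 'M_N = R^N (x) R^N *)
Definition tens (v : 'rV[R]_N) : 'M[R]_N := v^T *m v.

(* symmetric tensors in (L (x) R) (x) (L (x) R) : sum_{i,j} a_ij b_i (x) b_j
   with a symmetric, b_i the basis vectors *)
Definition sym_tensor k (B : 'M[R]_(k, N)) (T : 'M[R]_N) : Prop :=
  exists a : 'M[R]_k, a^T = a /\
    T = \sum_(i < k) \sum_(j < k) a i j *: ((row i B)^T *m row j B).

Definition in_min_span k (B : 'M[R]_(k, N)) (T : 'M[R]_N) : Prop :=
  exists n (w : 'I_n -> 'rV[R]_N) (c : 'I_n -> R),
    (forall i, min_vec B (w i)) /\ T = \sum_(i < n) c i *: tens (w i).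

Definition perfect k (B : 'M[R]_(k, N)) : Prop :=
  forall T, in_min_span B T <-> sym_tensor B T.

Definition sublat k k' (B' : 'M[R]_(k', N)) (B : 'M[R]_(k, N)) : Prop :=
  forall u, in_lat B' u -> in_lat B u.

Definition same_lat k k' (B' : 'M[R]_(k', N)) (B : 'M[R]_(k, N)) : Prop :=
  forall u, in_lat B' u <-> in_lat B u.

End Lattices.

(* Main.v *)
Require Import Defs.
From HB Require Import structures.
From mathcomp Require Import all_boot all_order all_algebra.
From mathcomp Require Import ring.
Set Implicit Arguments. Unset Strict Implicit. Unset Printing Implicit Defensive.
Import Order.TTheory GRing.Theory Num.Theory.
Local Open Scope ring_scope.

Section Helpers.
Variables (R : realFieldType) (N : nat).

Lemma trZ m n (a : R) (A : 'M[R]_(m, n)) : (a *: A)^T = a *: A^T.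
Proof. by apply/matrixP => i j; rewrite !mxE. Qed.

Lemma symsumE k (B : 'M[R]_(k, N)) (a : 'M[R]_k) :
  \sum_(i < k) \sum_(j < k) a i j *: ((row i B)^T *m row j B) = B^T *m a *m B.
Proof.
rewrite [in RHS](matrix_sum_delta a) mulmx_sumr mulmx_suml; apply: eq_bigr => i _.
rewrite mulmx_sumr mulmx_suml; apply: eq_bigr => j _.
rewrite -scalemxAr -scalemxAl; congr (_ *: _).
by rewrite !rowE trmx_mul trmx_delta !mulmxA -(mulmxA _ (delta_mx i 0)) mul_delta_mx.
Qed.

Lemma sym_tensorE k (B : 'M[R]_(k, N)) T :
  sym_tensor B T <-> exists a, a^T = a /\ T = B^T *m a *m B.
Proof.
by split=> -[a [Ha ->]]; exists a; rewrite symsumE.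
Qed.

Lemma in_latE k (B : 'M[R]_(k, N)) u :
  in_lat B u <-> exists z : 'rV[int]_k, u = map_mx intr z *m B.
Proof.
rewrite /in_lat; split.
  move=> [z ->]; exists (\row_i z i); rewrite mulmx_sum_row.
  by apply: eq_bigr => i _; rewrite !mxE.
move=> [z ->]; exists (fun i => z 0 i); rewrite mulmx_sum_row.
by apply: eq_bigr => i _; rewrite !mxE.
Qed.


Lemma span_add k (B : 'M[R]_(k, N)) T1 T2 :
  in_min_span B T1 -> in_min_span B T2 -> in_min_span B (T1 + T2).
Proof.
move=> [n1 [w1 [c1 [H1 ->]]]] [n2 [w2 [c2 [H2 ->]]]].
exists (n1 + n2)%N, (fun i => match split i with inl j => w1 j | inr j => w2 j end),
  (fun i => match split i with inl j => c1 j | inr j => c2 j end); split.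
  by move=> i; case: (split i).
rewrite big_split_ord /=; congr (_ + _); apply: eq_bigr => i _.
  by have /= -> := @unsplitK n1 n2 (inl i).
by have /= -> := @unsplitK n1 n2 (inr i).
Qed.

Lemma span_vec k (B : 'M[R]_(k, N)) w c :
  min_vec B w -> in_min_span B (c *: tens w).
Proof.
move=> Hw; exists 1%N, (fun _ => w), (fun _ => c); split=> //.
by rewrite big_ord1.
Qed.

Lemma span_sub k k' (B : 'M[R]_(k, N)) (B' : 'M[R]_(k', N)) T :
  (forall w, min_vec B' w -> min_vec B w) -> in_min_span B' T -> in_min_span B T.
Proof.
by move=> H [n [w [c [Hw ->]]]]; exists n, w, c; split=> // i; apply: H.
Qed.

Lemma span_sym k (B : 'M[R]_(k, N)) T : in_min_span B T -> sym_tensor B T.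
Proof.
move=> [n [w [c [Hw ->]]]].
have: forall i, exists z : 'rV[int]_k, w i = map_mx intr z *m B.
  by move=> i; case: (Hw i) => /in_latE.
case/fin_all_exists => z Hz; apply/sym_tensorE.
exists (\sum_i c i *: ((map_mx intr (z i))^T *m map_mx intr (z i))); split.
  rewrite raddf_sum; apply: eq_bigr => i _.
  by rewrite /= trZ trmx_mul trmxK.
rewrite mulmx_sumr mulmx_suml; apply: eq_bigr => i _.
rewrite /tens Hz -scalemxAr -scalemxAl; congr (_ *: _).
by rewrite trmx_mul !mulmxA.
Qed.

Lemma minvec_sub k k' (B : 'M[R]_(k, N)) (B' : 'M[R]_(k', N)) m w :
  sublat B' B -> lat_min B' m -> lat_min B m -> min_vec B' w -> min_vec B w.
Proof.
move=> Hs [u1 [[Hu1a Hu1b _] Hm1]] [u0 [[_ _ Hu0] Hm0]] [Hw Hw0 Hwm]; split=> //.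
  exact: Hs.
move=> x Hx Hx0; apply: le_trans (Hu0 x Hx Hx0).
by rewrite Hm0 -Hm1; apply: Hwm.
Qed.


Lemma lat_row k (B : 'M[R]_(k, N)) i : in_lat B (row i B).
Proof.
exists (fun j => (j == i)%:R); rewrite (bigD1 i) //= eqxx big1 ?addr0.
  by rewrite mulr1n rmorph1 scale1r.
by move=> j /negbTE ->; rewrite mulr0n rmorph0 scale0r.
Qed.

End Helpers.

Section Core.
Variables (F : fieldType) (d : nat).

Lemma symZ (Z : 'M[F]_(d.-1, d)) (s : 'M[F]_d) : s^T = s -> (s <= Z)%MS ->
  exists a1, a1^T = a1 /\ s = Z^T *m a1 *m Z.
Proof.
move=> Hs Hsub; have E1 := mulmxKpV Hsub.
move: E1; set P := pinvmx Z => E1; clearbody P.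
exists (P^T *m s *m P); split.
  by rewrite !trmx_mul trmxK Hs mulmxA.
have E2 : s = Z^T *m P^T *m s.
  by rewrite -{1}Hs -{1}E1 !trmx_mul Hs mulmxA.
by rewrite -!mulmxA (mulmxA s) E1 mulmxA -E2.
Qed.

Lemma getf (Z : 'M[F]_(d.-1, d)) (z : 'rV[F]_d) : ~~ (z <= Z)%MS ->
  exists f : 'cV[F]_d, Z *m f = 0 /\ (z *m f) 0 0 != 0.
Proof.
rewrite submxE => Hz.
have [j Hj] : exists j, (z *m cokermx Z) 0 j != 0.
  apply/existsP; apply: contraR Hz; rewrite negb_exists => /forallP H.
  apply/eqP/matrixP => i j; rewrite ord1 [X in _ = X]mxE; move: (H j); rewrite negbK; exact/eqP.
exists (col j (cokermx Z)); split.
  by rewrite colE mulmxA mulmx_coker mul0mx.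
by rewrite colE mulmxA -colE mxE.
Qed.

Lemma kerZ (Z : 'M[F]_(d.-1, d)) (f : 'cV[F]_d) : (d.-1 <= \rank Z)%N ->
  Z *m f = 0 -> f != 0 -> forall m (s : 'M[F]_(m, d)), s *m f = 0 -> (s <= Z)%MS.
Proof.
move=> Hr HZ Hf m s Hs.
have HZk : (Z <= kermx f)%MS by apply/sub_kermxP.
have Hk : (kermx f <= Z)%MS.
  rewrite -(mxrank_leqif_sup HZk).2 eqn_leq mxrankS //=.
  rewrite mxrank_ker; apply: leq_trans Hr.
  have : (0 < \rank f)%N by rewrite lt0n mxrank_eq0.
  by rewrite -subn1; move=> H; apply: leq_sub2l.
by apply: submx_trans Hk; apply/sub_kermxP.
Qed.


Lemma trZ' m n (a : F) (A : 'M[F]_(m, n)) : (a *: A)^T = a *: A^T.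
Proof. by apply/matrixP => i j; rewrite !mxE. Qed.

Lemma trB' m n (A B : 'M[F]_(m, n)) : (A - B)^T = A^T - B^T.
Proof. by apply/matrixP => i j; rewrite !mxE. Qed.

Lemma trD' m n (A B : 'M[F]_(m, n)) : (A + B)^T = A^T + B^T.
Proof. by apply/matrixP => i j; rewrite !mxE. Qed.

Lemma core (Z1 Z2 : 'M[F]_(d.-1, d)) (z : 'rV[F]_d) (a : 'M[F]_d) :
  (d.-1 <= \rank Z1)%N -> (d.-1 <= \rank Z2)%N -> ~~ (Z2 <= Z1)%MS ->
  ~~ (z <= Z1)%MS -> ~~ (z <= Z2)%MS -> a^T = a ->
  exists a1 a2 c, [/\ a1^T = a1, a2^T = a2 &
    a = Z1^T *m a1 *m Z1 + Z2^T *m a2 *m Z2 + c *: (z^T *m z)].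
Proof.
move=> Hr1 Hr2 HZ21 Hz1 Hz2 Ha.
have [f1 [Hf1 Hzf1]] := getf Hz1.
have [f2 [Hf2 Hzf2]] := getf Hz2.
have f1n0 : f1 != 0 by apply: contraNneq Hzf1 => ->; rewrite mulmx0 mxE.
have f2n0 : f2 != 0 by apply: contraNneq Hzf2 => ->; rewrite mulmx0 mxE.
have K1 := kerZ Hr1 Hf1 f1n0.
have K2 := kerZ Hr2 Hf2 f2n0.
have [i Hi] : exists i, (Z2 *m f1) i 0 != 0.
  apply/existsP; apply: contraR HZ21; rewrite negb_exists => /forallP H.
  apply: K1; apply/matrixP => x y; rewrite ord1 [X in _ = X]mxE.
  by move: (H x); rewrite negbK => /eqP.
set g := (Z2 *m f1) i 0.
set sg := g^-1 *: row i Z2.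
have Hs1 : sg *m f1 = 1.
  rewrite -scalemxAl -row_mul; apply/matrixP => x y; rewrite !ord1.
  rewrite [LHS]mxE [X in _ * X]mxE [RHS]mxE /= mulVf //.
have Hs2 : sg *m f2 = 0 by rewrite -scalemxAl -row_mul Hf2 row0 scaler0.
clearbody sg.
set al := (z *m f1) 0 0.
set be := (z *m f2) 0 0.
set X := (f1^T *m a *m f2) 0 0.
set c := X / (al * be).
set a' := a - c *: (z^T *m z).
have Ha' : a'^T = a' by rewrite /a' trB' trZ' trmx_mul trmxK Ha.
set rh := f1^T *m a'.
set r := (rh *m f1) 0 0.
have Hrh2 : rh *m f2 = 0.
  have E : rh *m f2 = f1^T *m a *m f2 - c *: ((z *m f1)^T *m (z *m f2)).
    by rewrite /rh /a' mulmxBr mulmxBl -scalemxAr -scalemxAl trmx_mul !mulmxA.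
  rewrite E [z *m f1]mx11_scalar [z *m f2]mx11_scalar tr_scalar_mx -scalar_mxM.
  rewrite [f1^T *m a *m f2]mx11_scalar -/X -/al -/be.
  apply/matrixP => x y; rewrite !ord1 !mxE /= mulr1n /c divfK ?subrr // mulf_neq0 //.
have Hrht : rh^T = a' *m f1 by rewrite /rh trmx_mul Ha' trmxK.
have Hr : (rh *m f1) 0 0 = r by [].
clearbody r rh.
set s2 := sg^T *m rh + rh^T *m sg - r *: (sg^T *m sg).
set s1 := a' - s2.
have Hs2f2 : s2 *m f2 = 0.
  by rewrite /s2 mulmxBl mulmxDl -(mulmxA sg^T) Hrh2 -(mulmxA rh^T) Hs2 -scalemxAl -(mulmxA sg^T sg) Hs2 !mulmx0 scaler0 !addr0 subr0.
have Hs2f1 : s2 *m f1 = rh^T.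
  rewrite /s2 mulmxBl mulmxDl -(mulmxA sg^T) -(mulmxA rh^T) Hs1 -scalemxAl -(mulmxA sg^T sg) Hs1 !mulmx1.
  by rewrite [rh *m f1]mx11_scalar Hr mul_mx_scalar addrC addKr.
have Hs1f1 : s1 *m f1 = 0.
  by rewrite /s1 mulmxBl Hs2f1 Hrht subrr.
have Hs2s : s2^T = s2.
  by rewrite /s2 trB' trD' trZ' !trmx_mul !trmxK (addrC (rh^T *m sg)).
have Hs1s : s1^T = s1 by rewrite /s1 trB' Ha' Hs2s.
have [a1 [Ha1 E1]] := symZ Hs1s (K1 _ _ Hs1f1).
have [a2 [Ha2 E2]] := symZ Hs2s (K2 _ _ Hs2f2).
exists a1, a2, c; split => //.
by rewrite -E1 -E2 /s1 subrK /a' subrK.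
Qed.

End Core.

Lemma clear_den n (y : 'rV[rat]_n) :
  exists k : int, k != 0 /\ exists cc : 'rV[int]_n, map_mx intr cc = k%:~R *: y.
Proof.
exists (\prod_i denq (y 0 i)); split.
  have : 0 < \prod_i denq (y 0 i) by apply: prodr_gt0 => i _; exact: denq_gt0.
  by rewrite lt0r => /andP[].
exists (\row_i (numq (y 0 i) * \prod_(j | j != i) denq (y 0 j))).
apply/matrixP => x i; rewrite !mxE ord1 [X in _ = X%:~R * _](bigD1 i) //= !rmorphM /= numqE. 
ring.
Qed.

Section Rat.
Variables (R : realFieldType) (N : nat).

Lemma mapq m n (A : 'M[int]_(m, n)) :
  map_mx (ratr : rat -> R) (map_mx intr A) = map_mx intr A.
Proof. by apply/matrixP => i j; rewrite !mxE ratr_int. Qed.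

Lemma notin_span d k (B1 : 'M[R]_(k, N)) (B : 'M[R]_(d, N)) (Z1 : 'M[int]_(k, d))
    (zi : 'rV[int]_d) (v : 'rV[R]_N) :
  B1 = map_mx intr Z1 *m B -> v = map_mx intr zi *m B -> v != 0 ->
  (forall q : rat, in_lat B1 (ratr q *: v) -> ratr q *: v = 0) ->
  ~~ ((map_mx intr zi : 'rV[R]_d) <= (map_mx intr Z1 : 'M[R]_(k, d)))%MS.
Proof.
move=> EB1 Ev vn0 Hq; apply/negP => Hsub.
rewrite -(mapq Z1) -(mapq zi) map_submx in Hsub.
have Ey := mulmxKpV Hsub.
have [kk [kn0 [cc Hc]]] := clear_den (map_mx intr zi *m pinvmx (map_mx intr Z1)).
have E : kk%:~R *: map_mx intr zi = map_mx intr cc *m map_mx (intr : int -> rat) Z1.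
  by rewrite Hc -scalemxAl Ey.
have ER : kk%:~R *: map_mx intr zi = map_mx intr cc *m (map_mx intr Z1 : 'M[R]_(k, d)).
  have := congr1 (map_mx (ratr : rat -> R)) E.
  by rewrite map_mxZ map_mxM !mapq /= ratr_int.
have : in_lat B1 (ratr (kk%:~R) *: v).
  apply/in_latE; exists cc.
  by rewrite ratr_int Ev scalemxAl ER EB1 mulmxA.
move/Hq/eqP; rewrite scaler_eq0 ratr_int intr_eq0 (negPf kn0) /=.
by apply/negP.
Qed.

End Rat.

Theorem corollary2p4 (R : realFieldType) (N d : nat)
    (B : 'M[R]_(d, N)) (B1 B2 : 'M[R]_(d.-1, N)) (m : R) (v : 'rV[R]_N) :
  lattice_basis B -> lat_min B m ->
  lattice_basis B1 -> lattice_basis B2 ->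
  sublat B1 B -> sublat B2 B ->
  ~ same_lat B1 B2 ->
  perfect B1 -> perfect B2 ->
  lat_min B1 m -> lat_min B2 m ->
  \rank (col_mx B1 B2) = d ->
  min_vec B v ->
  (forall q : rat, in_lat B1 (ratr q *: v) -> ratr q *: v = 0) ->
  (forall q : rat, in_lat B2 (ratr q *: v) -> ratr q *: v = 0) ->
  perfect B.
Proof.
move=> HB Hm HB1 HB2 Hs1 Hs2 _ Hp1 Hp2 Hm1 Hm2 Hrk Hv Hq1 Hq2.
have getZ : forall k (B' : 'M[R]_(k, N)), sublat B' B ->
    exists Z : 'M[int]_(k, d), B' = map_mx intr Z *m B.
  move=> k B' Hs.
  have : forall i, exists z : 'rV[int]_d, row i B' = map_mx intr z *m B.
    by move=> i; apply/in_latE; apply: Hs; exact: lat_row.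
  case/fin_all_exists => Zf HZ; exists (\matrix_i Zf i).
  by apply/row_matrixP => i; rewrite row_mul -map_row rowK HZ.
have [Z1 E1] := getZ _ _ Hs1.
have [Z2 E2] := getZ _ _ Hs2.
have Hv' := Hv; case: Hv' => /in_latE [zi Ev] vn0 _.
have Hn1 := notin_span E1 Ev vn0 Hq1.
have Hn2 := notin_span E2 Ev vn0 Hq2.
set Z1R : 'M[R]_(d.-1, d) := map_mx intr Z1 in E1 Hn1.
set Z2R : 'M[R]_(d.-1, d) := map_mx intr Z2 in E2 Hn2.
set zR : 'rV[R]_d := map_mx intr zi in Ev Hn1 Hn2.
have Hr : forall (B' : 'M[R]_(d.-1, N)) (Z : 'M[R]_(d.-1, d)), B' = Z *m B ->
    row_free B' -> (d.-1 <= \rank Z)%N.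
  move=> B' Z -> H; apply: leq_trans (mxrankM_maxl Z B); by rewrite (eqP H).
have HZ21 : ~~ (Z2R <= Z1R)%MS.
  apply/negP => Hsub.
  have Hd : (d <= d.-1)%N.
    rewrite -{1}Hrk E1 E2 -mul_col_mx; apply: leq_trans (mxrankM_maxl _ _) _.
    apply: leq_trans (rank_leq_row Z1R); apply: mxrankS.
    by rewrite col_mx_sub submx_refl Hsub.
  have d0 : (d == 0)%N by move: Hd; case: (d) => // n; rewrite ltnn.
  have : (\rank zR == 0)%N.
    rewrite -leqn0; apply: leq_trans (rank_leq_col zR) _; by rewrite (eqP d0).
  rewrite mxrank_eq0 => /eqP z0; move/negP: Hn1; apply; rewrite z0; exact: sub0mx.
move=> T; split; first exact: span_sym.
move/sym_tensorE => [a [Ha ->]].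
have [a1 [a2 [c [Ha1 Ha2 Ea]]]] :=
  core (Hr _ _ E1 HB1) (Hr _ _ E2 HB2) HZ21 Hn1 Hn2 Ha.
rewrite Ea !mulmxDr !mulmxDl.
have M1 : in_min_span B (B^T *m (Z1R^T *m a1 *m Z1R) *m B).
  apply: (span_sub (B' := B1)); first by move=> w; apply: minvec_sub Hs1 Hm1 Hm.
  apply/Hp1/sym_tensorE.
  by exists a1; split=> //; rewrite E1 trmx_mul !mulmxA.
have M2 : in_min_span B (B^T *m (Z2R^T *m a2 *m Z2R) *m B).
  apply: (span_sub (B' := B2)); first by move=> w; apply: minvec_sub Hs2 Hm2 Hm.
  apply/Hp2/sym_tensorE.
  by exists a2; split=> //; rewrite E2 trmx_mul !mulmxA.
apply: span_add; first exact: span_add.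
have -> : B^T *m (c *: (zR^T *m zR)) *m B = c *: tens v.
  by rewrite /tens Ev -scalemxAr -scalemxAl trmx_mul !mulmxA.
exact: span_vec.
Qed.
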